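(* Let the Mathieu group $M_{12}$ act (sharply $5$-transitively) on a $12$-element set $\Omega$, with a distinguished point $F\in\Omega$. Then (a) $hd((M_{12})^{\triangle}_{-})\geq 6$; (b) $M(11,6)\geq |M_{12}|=95040$; (c) $M(10,6)\geq 8640$.
   Context: $hd(\pi,\sigma)$ is the number of points at which permutations $\pi,\sigma$ differ; $hd(A)$ is the minimum over distinct pairs in $A$. For a permutation $\pi$ of $\Omega$, $\pi^{\triangle}$ is defined by $\pi^{\triangle}(\pi^{-1}(F))=\pi(F)$, $\pi^{\triangle}(F)=F$, $\pi^{\triangle}(x)=\pi(x)$ otherwise; $\pi^{\triangle}_{-}$ is its restriction to $\Omega\setminus\{F\}$; for a set $S$ of permutations, $S^{\triangle}_{-}=\{\pi^{\triangle}_{-}:\pi\in S\}$. $M(n,d)$ is the maximum size of a set of permutations of an $n$-element set with pairwise Hamming distance at least $d$. *)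

(* Defs.v *)
From HB Require Import structures.
From mathcomp Require Import all_boot all_order all_fingroup.
Set Implicit Arguments. Unset Strict Implicit. Unset Printing Implicit Defensive.

Section Defs.
Variable T : finType.

Definition hd (p q : {perm T}) : nat := #|[set x | p x != q x]|.

Definition sharply_transitive (k : nat) (G : {set {perm T}}) : Prop :=
  forall x y : 'I_k -> T, injective x -> injective y ->
    exists! g : {perm T}, g \in G /\ forall i, g (x i) = y i.

Variable F : T.

Definition tri_fun (p : {perm T}) (x : T) : T :=
  if x == F then F else if x == (p^-1)%g F then p F else p x.

Lemma tri_funE p x : tri_fun p x = p (tperm F ((p^-1)%g F) x).
Proof.
rewrite /tri_fun; case: tpermP => [->|->|]; rewrite ?eqxx ?permKV //.
- case: eqP => // e; by rewrite -{2}e permKV.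
- by move=> /eqP/negbTE -> /eqP/negbTE ->.
Qed.

Lemma tri_fun_inj p : injective (tri_fun p).
Proof. by move=> x y; rewrite !tri_funE => /perm_inj /perm_inj. Qed.

Definition tri (p : {perm T}) : {perm T} := perm (@tri_fun_inj p).

Lemma tri_F p : tri p F = F.
Proof. by rewrite permE /tri_fun eqxx. Qed.

Definition OmF := {x : T | x != F}.

Lemma tri_OmF p (x : OmF) : tri p (val x) != F.
Proof.
have hx : val x != F := valP x.
apply: contra hx => /eqP e; apply/eqP; apply: (@perm_inj _ (tri p)).
by rewrite e tri_F.
Qed.

Definition trim_fun (p : {perm T}) (x : OmF) : OmF := exist (fun y => y != F) _ (tri_OmF p x).

Lemma trim_fun_inj p : injective (trim_fun p).
Proof. by move=> x y /(congr1 val) /= /perm_inj /val_inj. Qed.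

Definition trim (p : {perm T}) : {perm OmF} := perm (@trim_fun_inj p).

End Defs.

Definition perm_code (n d : nat) (A : {set {perm 'I_n}}) : bool :=
  [forall p in A, forall q in A, (p != q) ==> (d <= hd p q)].

Definition Mnd (n d : nat) : nat :=
  \max_(A : {set {perm 'I_n}} | perm_code d A) #|A|.

(* Main.v *)
Require Import Defs.
From HB Require Import structures.
From mathcomp Require Import all_boot all_order all_fingroup all_solvable zify.


Lemma agree_eq (T : finType) (G : {set {perm T}}) (g h : {perm T}) :
  sharply_transitive 5 G -> g \in G -> h \in G ->
  4 < #|[set x | g x == h x]| -> g = h.
Proof.
move=> ST Gg Gh Hc.
set X := [set x | g x == h x] in Hc.
have [x0 _] : exists x0, x0 \in X.
  by apply/set0Pn; rewrite -card_gt0 (leq_trans _ Hc).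
set s := enum X.
have Hs : 4 < size s by rewrite -cardE.
pose x := fun i : 'I_5 => nth x0 s i.
have xinj : injective x.
  move=> i j; rewrite /x => /eqP; rewrite nth_uniq ?enum_uniq //.
    by move/eqP/val_inj.
  by apply: leq_trans Hs; rewrite ltnS -ltnS.
  by apply: leq_trans Hs; rewrite ltnS -ltnS.
have yinj : injective (fun i => g (x i)).
  by move=> i j /perm_inj /xinj.
have [g0 [_ U]] := ST x _ xinj yinj.
have xX i : x i \in X.
  rewrite /x /s; have := mem_nth x0 (_ : (i : nat) < size (enum X)).
  rewrite mem_enum; apply; apply: leq_trans Hs; rewrite ltnS -ltnS //.
have <- := U g (conj Gg (fun i => erefl)).
apply: U; split => // i; have := xX i; rewrite inE => /eqP ->//.
Qed.

Section A.
Variable T : finType.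
Variable F : T.

Lemma triE (p : {perm T}) x : tri F p x = tri_fun F p x.
Proof. by rewrite permE. Qed.

Lemma hd_trim (p q : {perm T}) : hd (trim F p) (trim F q) = hd (tri F p) (tri F q).
Proof.
rewrite /hd.
have -> : [set x | tri F p x != tri F q x] = val @: [set x : OmF F | trim F p x != trim F q x].
  apply/setP => x; rewrite inE; apply/idP/imsetP.
    move=> H; have xF : x != F by apply: contra H => /eqP ->; rewrite !tri_F.
    exists (exist _ x xF) => //; rewrite inE; apply: contra H => /eqP/(congr1 val).
    by rewrite !permE /= => E; rewrite -!triE E.
  case=> y; rewrite inE => H ->; apply: contra H => /eqP H; apply/eqP/val_inj.
  by rewrite /= !permE /=.
by rewrite (card_imset _ val_inj).
Qed.

Lemma tri_fix (p : {perm T}) : p F = F -> tri F p = p.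
Proof.
move=> H; apply/permP => x; rewrite triE tri_funE.
have -> : (p^-1)%g F = F by rewrite -{1}H permK.
by rewrite tperm1 perm1.
Qed.

End A.

Lemma card3 (T : finType) (F a b : T) : #|[set F; a; b]| <= 3.
Proof. rewrite cardsU cards2 cards1; lia. Qed.

Section A.
Variable T : finType.
Variable F : T.

Lemma tri_hd6 (G : {group {perm T}}) (p q : {perm T}) :
  #|T| = 12 -> sharply_transitive 5 G -> p \in G -> q \in G -> p != q ->
  6 <= hd (tri F p) (tri F q).
Proof.
move=> hT ST Gp Gq pq.
set a := (p^-1)%g F; set b := (q^-1)%g F.
have pa : p a = F by rewrite /a permKV.
have qb : q b = F by rewrite /b permKV.
have trp x : x != F -> x != a -> tri F p x = p x.
  by move=> h1 h2; rewrite triE /tri_fun (negbTE h1) (negbTE h2).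
have tra : a != F -> tri F p a = p F.
  by move=> h1; rewrite triE /tri_fun (negbTE h1) eqxx.
have trq x : x != F -> x != b -> tri F q x = q x.
  by move=> h1 h2; rewrite triE /tri_fun (negbTE h1) (negbTE h2).
have trb : b != F -> tri F q b = q F.
  by move=> h1; rewrite triE /tri_fun (negbTE h1) eqxx.
set E := [set x | p x == q x].
have E4 : #|E| <= 4.
  rewrite leqNgt; apply/negP => /(@agree_eq _ _ _ _ ST Gp Gq) e; by rewrite e eqxx in pq.
set S := [set x | tri F p x == tri F q x].
have hdS : hd (tri F p) (tri F q) = 12 - #|S|.
  rewrite /hd -hT -(cardsC S) addKn; apply: eq_card => x; by rewrite !inE.
set D := S :\: E.
have SED : #|S| <= #|E| + #|D|.
  apply: leq_trans (_ : #|E :|: D| <= _); last by rewrite cardsU leq_subr.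
  apply: subset_leq_card; apply/subsetP => x xS.
  by rewrite in_setU in_setD xS andbT orbN.
have hD x : x \in D -> [/\ x \in S, x \notin E & [|| x == F, x == a | x == b]].
  rewrite !inE => /andP [nE eqS]; split => //.
  apply/negPn/negP => /norP [xF /norP [xa xb]].
  by move: nE; rewrite trp // trq // in eqS; rewrite eqS.
have D3 : #|D| <= 3.
  have := @card3 _ F a b; apply: leq_trans; apply: subset_leq_card; apply/subsetP => x /hD [_ _].
  by rewrite !inE orbA.
suff : #|S| <= 6 by rewrite hdS; lia.
have [E3|E4'] : #|E| <= 3 \/ #|E| = 4 by lia.
  by lia.
suff : #|D| <= 2 by lia.
have two u v : (forall x, x \in D -> x = u \/ x = v) -> #|D| <= 2.
  move=> H; apply: leq_trans (_ : #|[set u; v]| <= 2); last by rewrite cards2; case: (u != v).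
  apply: subset_leq_card; apply/subsetP => x /H [] ->; by rewrite !inE eqxx ?orbT.
case aS: (a \in S); last first.
  apply: (two F b) => x /hD [xS _ /or3P [] /eqP e]; move: xS; rewrite e => xS;
    [by left|by rewrite xS in aS|by right].
case bS: (b \in S); last first.
  apply: (two F a) => x /hD [xS _ /or3P [] /eqP e]; move: xS; rewrite e => xS;
    [by left|by right|by rewrite xS in bS].
case FE: (F \in E).
  apply: (two a b) => x /hD [xS xE /or3P [] /eqP e]; move: xE; rewrite e => xE;
    [by rewrite FE in xE|by left|by right].
case: (eqVneq a b) => [eab|nab].
  apply: (two F a) => x /hD [xS _ /or3P [] /eqP e]; rewrite e;
    [by left|by right|by rewrite -eab; right].
case: (eqVneq a F) => [eaF|naF].
  apply: (two F b) => x /hD [xS _ /or3P [] /eqP e]; rewrite e;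
    [by left|by rewrite eaF; left|by right].
case: (eqVneq b F) => [ebF|nbF].
  apply: (two F a) => x /hD [xS _ /or3P [] /eqP e]; rewrite e;
    [by left|by right|by rewrite ebF; left].
exfalso.
have e1 : p F = q a.
  by move: aS; rewrite inE tra // trq // eq_sym ?nab // => /eqP.
have e2 : p b = q F.
  by move: bS; rewrite inE trb // trp // eq_sym ?nab // => /eqP.
set r := (p * q^-1)%g.
have rE x : r x = (q^-1)%g (p x) by rewrite permM.
have rF : r F = a by rewrite rE e1 permK.
have ra : r a = b by rewrite rE pa.
have rb : r b = F by rewrite rE e2 permK.
have rfix x : (r x == x) = (x \in E).
  rewrite rE inE; apply/eqP/eqP => [H|->]; [by rewrite -{2}H permKV|by rewrite permK].
have Gr : r \in G by rewrite groupM ?groupV.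
have rq : r != 1%g by rewrite -eq_mulgV1.
clearbody r.
have r3 : (r ^+ 3)%g = 1%g.
  apply: (@agree_eq _ _ _ _ ST); rewrite ?groupX ?group1 //.
  apply: leq_trans (_ : #|F |: E| <= _); first by rewrite cardsU1 FE E4'.
  apply: subset_leq_card; apply/subsetP => x; rewrite !inE perm1.
  rewrite !expgS expg0 mulg1 !permM.
  case/orP => [/eqP ->|]; first by rewrite rF ra rb.
  move=> h; have /eqP rx : r x == x by rewrite rfix inE.
  by rewrite !rx.
have or3 : #[r]%g = 3.
  have : (#[r]%g %| 3) by rewrite order_dvdn r3.
  have : #[r]%g != 1 by rewrite order_eq1.
  have : 0 < #[r]%g by exact: order_gt0.
  by case: #[r]%g => [|[|[|[|n]]]].
have pg : pgroup 3 <[r]>%g by rewrite pgroupE -orderE or3 pnat_id.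
have acts : [acts <[r]>%g, on [set: T] | 'P].
  by apply/actsP => g _ x; rewrite !inE.
have := pgroup_fix_mod pg acts.
have -> : ('Fix_([set: T] | 'P)(<[r]>))%g = E.
  rewrite setTI afix_cycle; apply/setP => x; rewrite -rfix.
  by apply/afix1P/eqP.
by rewrite cardsT hT E4'.
Qed.

End A.

Definition is_code (U : finType) (d : nat) (C : {set {perm U}}) :=
  forall p q, p \in C -> q \in C -> p != q -> d <= hd p q.
Arguments is_code {U}.

Lemma hd_same (U : finType) (p : {perm U}) : hd p p = 0.
Proof. by rewrite /hd; apply: eq_card0 => x; rewrite inE eqxx. Qed.

Section Conj.
Variables (U V : finType) (f : U -> V) (g : V -> U).
Hypotheses (fK : cancel f g) (gK : cancel g f).

Lemma conj_inj (s : {perm U}) : injective (fun i => f (s (g i))).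
Proof. by move=> i j /(can_inj fK) /perm_inj /(can_inj gK). Qed.

Definition cnj (s : {perm U}) : {perm V} := perm (conj_inj s).

Lemma cnjE s u : cnj s (f u) = f (s u).
Proof. by rewrite permE /= fK. Qed.

Lemma cnj_inj : injective cnj.
Proof.
move=> s t e; apply/permP => u; apply: (can_inj fK).
by rewrite -!cnjE e.
Qed.

Lemma hd_cnj s t : hd (cnj s) (cnj t) = hd s t.
Proof.
rewrite /hd.
have -> : [set i | cnj s i != cnj t i] = f @: [set u | s u != t u].
  apply/setP => i; rewrite inE; apply/idP/imsetP.
    by move=> H; exists (g i); rewrite ?gK // inE; rewrite -(gK i) !cnjE (can_eq fK) in H.
  by case=> u; rewrite inE => H ->; rewrite !cnjE (can_eq fK).
by rewrite (card_imset _ (can_inj fK)).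
Qed.
End Conj.

Lemma code_le (U : finType) n d (C : {set {perm U}}) :
  #|U| = n -> is_code d C -> #|C| <= Mnd n d.
Proof.
move=> hU HC.
pose f := fun u : U => cast_ord hU (enum_rank u).
pose g := fun i : 'I_n => enum_val (cast_ord (esym hU) i).
have fK : cancel f g by move=> u; rewrite /f /g cast_ordK enum_rankK.
have gK : cancel g f by move=> i; rewrite /f /g enum_valK cast_ordKV.
set A := (@cnj _ _ _ _ fK gK) @: C.
have -> : #|C| = #|A| by rewrite card_imset //; apply: cnj_inj.
rewrite /Mnd; apply: (@leq_bigmax_cond _ (fun A0 => perm_code d A0) (fun A0 => #|A0|) A).
apply/forallP => p'; apply/implyP => /imsetP [s Hs ->].
apply/forallP => q'; apply/implyP => /imsetP [t Ht ->].
apply/implyP => neq; rewrite hd_cnj; apply: HC => //.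
by apply: contra neq => /eqP ->.
Qed.

Lemma hd_mulr (U : finType) (s t r : {perm U}) : hd (s * r)%g (t * r)%g = hd s t.
Proof. by rewrite /hd; apply: eq_card => x; rewrite !inE !permM (inj_eq perm_inj). Qed.

Lemma shorten (U : finType) n d (C : {set {perm U}}) (x0 : U) :
  #|U| = n.+1 -> 0 < d -> is_code d C -> #|C| <= n.+1 * Mnd n d.
Proof.
move=> hU d0 HC.
pose Cy y := [set s in C | s x0 == y].
have sumC : #|C| = \sum_(y : U) #|Cy y|.
  rewrite -sum1_card (partition_big (fun s : {perm U} => s x0) xpredT) //.
  apply: eq_bigr => y _; rewrite -sum1dep_card.
  by [].
have [y _ ymax] := @arg_maxnP U x0 xpredT (fun y => #|Cy y|) isT.
have le1 : #|C| <= n.+1 * #|Cy y|.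
  rewrite sumC; apply: (@leq_trans (\sum_(j : U) #|Cy y|)).
    by apply: leq_sum => j _; apply: ymax.
  by rewrite sum_nat_const cardT -cardE hU.
apply: (leq_trans le1); rewrite leq_mul2l /=.
pose t := tperm y x0.
have key s u : s \in Cy y -> u \in Cy y ->
    hd (trim x0 (s * t)%g) (trim x0 (u * t)%g) = hd s u.
  rewrite !inE => /andP [_ /eqP sy] /andP [_ /eqP uy].
  rewrite hd_trim !tri_fix ?hd_mulr //; by rewrite permM ?sy ?uy tpermL.
apply: (@leq_trans #|[set trim x0 (s * t)%g | s in Cy y]|).
  rewrite card_in_imset //; move=> s u Hs Hu e.
  apply/eqP; apply: contraT => ne.
  have sC : s \in C by move: Hs; rewrite inE => /andP [].
  have uC : u \in C by move: Hu; rewrite inE => /andP [].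
  have := HC s u sC uC ne; rewrite -key // e hd_same.
  by rewrite leqNgt d0.
apply: (@code_le (OmF x0) n d [set trim x0 (s * t)%g | s in Cy y]).
  by rewrite card_sig cardC1 hU.
move=> p' q' /imsetP [s Hs ->] /imsetP [u Hu ->] ne.
rewrite key //; apply: HC.
- by move: Hs; rewrite inE => /andP [].
- by move: Hu; rewrite inE => /andP [].
- by apply: contra ne => /eqP ->.
Qed.

Lemma cardG (T : finType) (G : {group {perm T}}) :
  #|T| = 12 -> sharply_transitive 5 G -> #|G| = 95040.
Proof.
move=> hT ST.
have le5 : 5 <= #|T| by rewrite hT.
pose x0 := fun i : 'I_5 => enum_val (widen_ord le5 i).
have x0inj : injective x0.
  by move=> i j /enum_val_inj /(congr1 val) /= h; apply: val_inj.
pose phi := fun g : {perm T} => [ffun i => g (x0 i)].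
have -> : #|G| = #|phi @: G|.
  rewrite card_in_imset // => g h Gg Gh e.
  have yinj : injective (fun i => g (x0 i)) by move=> i j /perm_inj /x0inj.
  have [g0 [_ U]] := ST x0 _ x0inj yinj.
  have <- := U g (conj Gg (fun i => erefl)).
  apply: U; split => // i.
  by move: e => /ffunP/(_ i); rewrite !ffunE => ->.
have -> : phi @: G = [set f : {ffun 'I_5 -> T} | injectiveb f].
  apply/setP => f; rewrite inE; apply/imsetP/injectiveP.
    by case=> g _ -> i j; rewrite !ffunE => /perm_inj /x0inj.
  move=> finj; have [g [[Gg Hg] _]] := ST x0 f x0inj finj.
  by exists g => //; apply/ffunP => i; rewrite ffunE Hg.
by rewrite card_inj_ffuns card_ord hT.
Qed.

Theorem proposition17 (T : finType) (F : T) (G : {group {perm T}}) :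
  #|T| = 12 -> sharply_transitive 5 G ->
  [/\ (forall p q, p \in G -> q \in G -> trim F p != trim F q ->
         6 <= hd (trim F p) (trim F q)),
      #|G| <= Mnd 11 6 /\ #|G| = 95040
    & 8640 <= Mnd 10 6].
Proof.
move=> hT ST.
have hdG p q : p \in G -> q \in G -> p != q -> 6 <= hd (trim F p) (trim F q).
  by move=> Gp Gq ne; rewrite hd_trim; apply: (@tri_hd6 _ F G).
set C := (trim F) @: G.
have cC : #|C| = #|G|.
  rewrite card_in_imset // => p q Gp Gq e; apply/eqP; apply: contraT => ne.
  by have := hdG p q Gp Gq ne; rewrite e hd_same.
have codeC : is_code 6 C.
  move=> p' q' /imsetP [p Gp ->] /imsetP [q Gq ->] ne; apply: hdG => //.
  by apply: contra ne => /eqP ->.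
have cOm : #|(OmF F : finType)| = 11 by rewrite card_sig cardC1 hT.
have cG := @cardG _ _ hT ST.
split.
- move=> p q Gp Gq ne; apply: hdG => //; by apply: contra ne => /eqP ->.
- by split => //; rewrite -cC; apply: (@code_le _ 11 6 C cOm codeC).
have /card_gt0P [x0 _] : 0 < #|(OmF F : finType)| by rewrite cOm.
have := @shorten (OmF F) 10 6 C x0 cOm isT codeC.
rewrite cC cG => h; rewrite -(@leq_pmul2l 11) // (_ : 11 * 8640 = 95040) //.
Qed.
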